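(* Let $F$ be a Banach lattice, $E$ a Banach space and $T\in\mathcal{L}(F,E)$. (i) If $T$ is DNS, then $T$ is weakly DNS. (ii) If $T$ is strongly DNS, then $T$ is strictly DNS.
   Context: $\mathrm{S}_F$ is the unit sphere; $x,y$ disjoint means $|x|\wedge|y|=0$. $T$ is DNS if there is no disjoint $(f_n)\subset\mathrm{S}_F$ with $\|Tf_n\|\to0$; strictly DNS if there is $\delta>0$ such that no disjoint $(f_n)\subset\mathrm{S}_F$ satisfies $\|Tf_n\|\le\delta$ for all $n$. The un-topology on $F$ has zero neighborhood base $\{f:\||f|\wedge h\|<\varepsilon\}$, $h\in F_+$, $\varepsilon>0$; the una-topology is defined the same way with $h$ in the positive part of the ideal $F^a$ of order continuous elements of $F$. $T$ is weakly (resp. strongly) DNS if there is no net $(f_i)\subset\mathrm{S}_F$ that is un-null (resp. una-null) and satisfies $\|Tf_i\|\to0$. *)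

(* Defs.v *)
(* Banach lattices are not in the library; we
   define them here as a complete normed space over a realType together with
   a vector-lattice order (a relation [le] and a binary supremum [jn]). *)
From HB Require Import structures.
From mathcomp Require Import all_boot all_order all_algebra.
From mathcomp Require Import all_classical all_reals all_analysis.
Set Implicit Arguments. Unset Strict Implicit. Unset Printing Implicit Defensive.
Import Order.TTheory GRing.Theory Num.Theory.
Import numFieldNormedType.Exports.
Local Open Scope ring_scope.
Local Open Scope classical_set_scope.

Section BanachLattice.
Variable R : realType.
Variable F : normedModType R.
Variable le : F -> F -> Prop.
Variable jn : F -> F -> F.

Definition lmeet (x y : F) : F := - jn (- x) (- y).
Definition labs (x : F) : F := jn x (- x).

(* [le], [jn] make F a normed vector lattice (Riesz space with a
   lattice norm). Together with completeness of F this is a Banach lattice. *)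
Definition is_normed_lattice : Prop :=
  [/\ (forall x, le x x),
      (forall x y, le x y -> le y x -> x = y)
    & (forall x y z, le x y -> le y z -> le x z)] /\
  [/\ (forall x y z, le x y -> le (x + z) (y + z)),
      (forall (a : R) x y, 0 <= a -> le x y -> le (a *: x) (a *: y)),
      (forall x y, le x (jn x y) /\ le y (jn x y)),
      (forall x y z, le x z -> le y z -> le (jn x y) z)
    & (forall x y, le (labs x) (labs y) -> `|x| <= `|y|)].

Definition disjoint (x y : F) : Prop := lmeet (labs x) (labs y) = 0.

Definition positive (x : F) : Prop := le 0 x.

Definition directed (I : Type) (leI : I -> I -> Prop) : Prop :=
  [/\ inhabited I, (forall i, leI i i),
      (forall i j k, leI i j -> leI j k -> leI i k)
    & (forall i j, exists k, leI i k /\ leI j k)].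

Definition net_to0 (I : Type) (leI : I -> I -> Prop) (a : I -> R) : Prop :=
  forall eps : R, 0 < eps -> exists i0, forall i, leI i0 i -> `|a i| < eps.

(* Order continuous element x: every net u_i decreasing to 0 (in order) with
   0 <= u_i <= |x| is norm-null.  F^a is the set of these elements. *)
Definition order_continuous_elt (x : F) : Prop :=
  forall (I : Type) (leI : I -> I -> Prop) (u : I -> F),
    directed leI ->
    (forall i, le 0 (u i) /\ le (u i) (labs x)) ->
    (forall i j, leI i j -> le (u j) (u i)) ->
    (forall z, (forall i, le z (u i)) -> le z 0) ->
    net_to0 leI (fun i => `|u i|).

Definition un_null (I : Type) (leI : I -> I -> Prop) (f : I -> F) : Prop :=
  forall h, positive h -> net_to0 leI (fun i => `|lmeet (labs (f i)) h|).

Definition una_null (I : Type) (leI : I -> I -> Prop) (f : I -> F) : Prop :=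
  forall h, positive h -> order_continuous_elt h ->
    net_to0 leI (fun i => `|lmeet (labs (f i)) h|).

Variable E : normedModType R.

Definition disjoint_seq (f : nat -> F) : Prop :=
  forall n m, n <> m -> disjoint (f n) (f m).

Definition DNS (T : F -> E) : Prop :=
  ~ exists f : nat -> F, [/\ (forall n, `|f n| = 1), disjoint_seq f
      & (fun n => `|T (f n)|) @ \oo --> (0 : R)].

Definition strictly_DNS (T : F -> E) : Prop :=
  exists delta : R, 0 < delta /\
    ~ exists f : nat -> F, [/\ (forall n, `|f n| = 1), disjoint_seq f
        & (forall n, `|T (f n)| <= delta)].

Definition weakly_DNS (T : F -> E) : Prop :=
  ~ exists (I : Type) (leI : I -> I -> Prop) (f : I -> F),
      [/\ directed leI, (forall i, `|f i| = 1), un_null leI f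
        & net_to0 leI (fun i => `|T (f i)|)].

Definition strongly_DNS (T : F -> E) : Prop :=
  ~ exists (I : Type) (leI : I -> I -> Prop) (f : I -> F),
      [/\ directed leI, (forall i, `|f i| = 1), una_null leI f
        & net_to0 leI (fun i => `|T (f i)|)].

End BanachLattice.

(* Main.v *)
Require Import Defs.
From HB Require Import structures.
From mathcomp Require Import all_boot all_order all_algebra.
From mathcomp Require Import all_classical all_reals all_analysis.
From mathcomp Require Import ring lra.
Import Order.TTheory GRing.Theory Num.Theory.
Import numFieldNormedType.Exports.
Local Open Scope ring_scope.

Module Aux.
Set Implicit Arguments. Unset Strict Implicit. Unset Printing Implicit Defensive.
Local Open Scope classical_set_scope.

Section Lat.
Variables (R : realType) (F : normedModType R) (le : F -> F -> Prop) (jn : F -> F -> F).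
Hypothesis HF : is_normed_lattice le jn.
Local Notation lm := (lmeet jn).
Local Notation la := (labs jn).

Lemma lerefl x : le x x. Proof. by case: HF => [[h _ _] _]; apply: h. Qed.
Lemma leanti x y : le x y -> le y x -> x = y. Proof. by case: HF => [[_ h _] _]; apply: h. Qed.
Lemma letr x y z : le x y -> le y z -> le x z. Proof. by case: HF => [[_ _ h]] _; apply: h. Qed.
Lemma leD x y z : le x y -> le (x + z) (y + z). Proof. by case: HF => _ [h _ _ _ _]; apply: h. Qed.
Lemma leZ (a : R) x y : 0 <= a -> le x y -> le (a *: x) (a *: y). Proof. by case: HF => _ [_ h _ _ _]; apply: h. Qed.
Lemma jnl x y : le x (jn x y). Proof. by case: HF => _ [_ _ h _ _]; case: (h x y). Qed.
Lemma jnr x y : le y (jn x y). Proof. by case: HF => _ [_ _ h _ _]; case: (h x y). Qed.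
Lemma jnlub x y z : le x z -> le y z -> le (jn x y) z. Proof. by case: HF => _ [_ _ _ h _]; apply: h. Qed.
Lemma lenorm x y : le (la x) (la y) -> `|x| <= `|y|. Proof. by case: HF => _ [_ _ _ _ h]; apply: h. Qed.

Lemma leDl x y z : le x y -> le (z + x) (z + y).
Proof. by move=> h; rewrite ![z + _]addrC; apply: leD. Qed.
Lemma leDD a b c d : le a b -> le c d -> le (a + c) (b + d).
Proof. move=> h1 h2; apply: (letr (leD c h1)); exact: leDl. Qed.
Lemma leN x y : le x y -> le (- y) (- x).
Proof.
move=> h; have := leD (- x - y) h.
by rewrite addrA subrr add0r addrCA subrr addr0.
Qed.
Lemma leNK x y : le (- y) (- x) -> le x y.
Proof. by move/leN; rewrite !opprK. Qed.
Lemma le_sub0 x y : le x y -> le 0 (y - x).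
Proof. by move=> h; have := leD (- x) h; rewrite subrr. Qed.
Lemma le0_sub x y : le 0 (y - x) -> le x y.
Proof. by move=> h; have := leD x h; rewrite add0r subrK. Qed.

Lemma jnC x y : jn x y = jn y x.
Proof. by apply: leanti; apply: jnlub; (apply: jnl || apply: jnr). Qed.
Lemma jnD x y z : jn (x + z) (y + z) = jn x y + z.
Proof.
apply: leanti; first by apply: jnlub; apply: leD; (apply: jnl || apply: jnr).
have h : le (jn x y) (jn (x + z) (y + z) - z).
  apply: jnlub.
    by have := leD (- z) (jnl (x + z) (y + z)); rewrite addrK.
  by have := leD (- z) (jnr (x + z) (y + z)); rewrite addrK.
by have := leD z h; rewrite subrK.
Qed.
Lemma jn_mono a b a' b' : le a a' -> le b b' -> le (jn a b) (jn a' b').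
Proof. move=> h1 h2; apply: jnlub; [apply: letr h1 (jnl _ _)|apply: letr h2 (jnr _ _)]. Qed.

Lemma lml x y : le (lm x y) x.
Proof. by rewrite /lmeet; apply: leNK; rewrite opprK; apply: jnl. Qed.
Lemma lmr x y : le (lm x y) y.
Proof. by rewrite /lmeet; apply: leNK; rewrite opprK; apply: jnr. Qed.
Lemma lmglb z x y : le z x -> le z y -> le z (lm x y).
Proof.
move=> h1 h2; rewrite /lmeet; apply: leNK; rewrite opprK.
by apply: jnlub; apply: leN.
Qed.
Lemma lmC x y : lm x y = lm y x. Proof. by rewrite /lmeet jnC. Qed.
Lemma lm_mono a b a' b' : le a a' -> le b b' -> le (lm a b) (lm a' b').
Proof. move=> h1 h2; apply: lmglb; [apply: letr (lml _ _) h1|apply: letr (lmr _ _) h2]. Qed.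
Lemma lmD x y z : lm (x + z) (y + z) = lm x y + z.
Proof. by rewrite /lmeet !opprD jnD opprD opprK. Qed.

Lemma jnlm x y : x + y = jn x y + lm x y.
Proof.
rewrite /lmeet.
have -> : jn x y = jn (- x) (- y) + (x + y).
  by rewrite -jnD addrA addNr add0r addrCA addNr addr0 jnC.
by rewrite addrAC subrr add0r.
Qed.

Lemma jnZ (c : R) x y : 0 < c -> jn (c *: x) (c *: y) = c *: jn x y.
Proof.
move=> c0; have c0' : 0 <= c by apply: ltW.
have cn : c != 0 by rewrite gt_eqF.
apply: leanti; first by apply: jnlub; apply: leZ => //; (apply: jnl || apply: jnr).
have ci : 0 <= c^-1 by rewrite invr_ge0.
have h : le (jn x y) (c^-1 *: jn (c *: x) (c *: y)).
  apply: jnlub.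
    by rewrite -{1}(scalerK cn x); apply: leZ => //; apply: jnl.
  by rewrite -{1}(scalerK cn y); apply: leZ => //; apply: jnr.
by have := leZ c0' h; rewrite scalerA mulfV // scale1r.
Qed.

Lemma lmZ (c : R) x y : 0 < c -> lm (c *: x) (c *: y) = c *: lm x y.
Proof. by move=> c0; rewrite /lmeet -!scalerN jnZ // scalerN. Qed.

Lemma le0Z (c : R) x : 0 <= c -> le 0 x -> le 0 (c *: x).
Proof. by move=> c0 h; have := leZ c0 h; rewrite scaler0. Qed.

Lemma la_ge0 x : le 0 (la x).
Proof.
have h := leDD (jnl x (- x)) (jnr x (- x)); rewrite subrr in h.
have h2 := @leZ (2%:R^-1 : R) _ _ ^~ h.
rewrite scaler0 in h2; rewrite /labs.
have e : jn x (- x) + jn x (- x) = (2%:R : R) *: jn x (- x).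
  by rewrite scaler_nat mulr2n.
rewrite e scalerA mulVf ?scale1r ?pnatr_eq0 // in h2.
by apply: h2; rewrite invr_ge0 ler0n.
Qed.

Lemma la_id x : le 0 x -> la x = x.
Proof.
move=> h; apply: leanti; last exact: jnl.
apply: jnlub; first exact: lerefl.
by apply: letr (leN h) _; rewrite oppr0.
Qed.

Lemma la_la x : la (la x) = la x.
Proof. exact/la_id/la_ge0. Qed.

Lemma norm_la x : `|la x| = `|x|.
Proof. by apply/eqP; rewrite eq_le; apply/andP; split; apply: lenorm; rewrite la_la; apply: lerefl. Qed.

Lemma norm_mono a b : le 0 a -> le a b -> `|a| <= `|b|.
Proof.
move=> ha hab; apply: lenorm; rewrite la_id // la_id //; exact: letr hab.
Qed.

Lemma laZ (c : R) x : 0 < c -> la (c *: x) = c *: la x.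
Proof. by move=> c0; rewrite /labs -scalerN jnZ. Qed.

Lemma lm_ge0 a b : le 0 a -> le 0 b -> le 0 (lm a b).
Proof. by move=> ha hb; apply: lmglb. Qed.

Lemma lm_addl a b c : le 0 a -> le 0 b -> le 0 c -> lm a c = 0 -> lm b c = 0 ->
  lm (a + b) c = 0.
Proof.
move=> ha hb hc hac hbc; set d := lm (a + b) c.
have d0 : le 0 d by apply: lm_ge0 => //; have := leDD ha hb; rewrite addr0.
have h1 : le (d - a) b.
  by have := leD (- a) (lml (a + b) c); rewrite addrAC subrr add0r.
have h2 : le (d - a) c.
  apply: letr (lmr (a + b) c); have := leDl d (leN ha).
  by rewrite oppr0 addr0.
have h3 : le d a.
  have := lmglb h1 h2; rewrite hbc => h.
  by have := leD a h; rewrite subrK add0r.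
have := lmglb h3 (lmr (a + b) c); rewrite hac => h4.
exact: leanti.
Qed.

Lemma lm_addr a b c : le 0 a -> le 0 b -> le 0 c -> lm c a = 0 -> lm c b = 0 ->
  lm c (a + b) = 0.
Proof. by move=> *; rewrite lmC lm_addl // lmC. Qed.

Lemma lmZZ (c c' : R) a b : 0 < c -> 0 < c' -> le 0 a -> le 0 b -> lm a b = 0 ->
  lm (c *: a) (c' *: b) = 0.
Proof.
move=> c0 c'0 ha hb hab; apply: leanti; last first.
  by apply: lm_ge0; apply: le0Z => //; apply: ltW.
have cc : 0 < c + c' by apply: addr_gt0.
have : le (lm (c *: a) (c' *: b)) (lm ((c + c') *: a) ((c + c') *: b)).
  apply: lm_mono; rewrite scalerDl.
    by have := leDl (c *: a) (le0Z (ltW c'0) ha); rewrite addr0.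
  by rewrite addrC; have := leDl (c' *: b) (le0Z (ltW c0) hb); rewrite addr0.
by rewrite lmZ // hab scaler0.
Qed.

Definition pp x := jn x 0.
Definition nn x := jn (- x) 0.

Lemma pp_ge0 x : le 0 (pp x). Proof. exact: jnr. Qed.
Lemma nn_ge0 x : le 0 (nn x). Proof. exact: jnr. Qed.
Lemma pp_la x : le (pp x) (la x). Proof. by apply: jnlub; [apply: jnl|apply: la_ge0]. Qed.
Lemma nn_la x : le (nn x) (la x). Proof. by apply: jnlub; [apply: jnr|apply: la_ge0]. Qed.

Lemma pp_nn x : pp x = x + nn x.
Proof. by rewrite /pp /nn addrC -jnD addNr add0r jnC. Qed.

Lemma lm_pp_nn x : lm (pp x) (nn x) = 0.
Proof.
rewrite pp_nn -{2}[nn x]add0r lmD.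
have -> : lm x 0 = - nn x by rewrite /lmeet /nn oppr0.
by rewrite addNr.
Qed.

Lemma cut_id a v : a - jn (a - v) 0 = lm a v.
Proof.
have -> : jn (a - v) 0 = jn (- v) (- a) + a by rewrite -jnD addNr addrC.
by rewrite opprD addrA addrAC subrr add0r /lmeet jnC.
Qed.

Lemma lm_addD a w e : le 0 e -> le (lm a (w + e)) (lm a w + e).
Proof.
move=> he; rewrite -lmD; apply: lm_mono; last exact: lerefl.
by have := leDl a he; rewrite addr0.
Qed.


Lemma real_small (a b : R) : 0 <= a -> 0 <= b -> (forall k : nat, a <= b / k.+1%:R) -> a = 0.
Proof.
move=> a0 b0 h; apply/eqP; rewrite eq_le a0 andbT; apply/negP => /negP.
rewrite -ltNge => ap.
have ba : 0 <= b / a by rewrite divr_ge0 // ltW.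
have := archi_boundP ba; set k := Num.Def.archi_bound _ => hk.
have := h k; rewrite ler_pdivlMr ?ltr0Sn // => hh.
have : b / a < k.+1%:R by apply: lt_le_trans hk _; rewrite ler_nat.
rewrite ltr_pdivrMr // => hb.
by move: hh; rewrite leNgt mulrC hb.
Qed.

Section DisjNull.
Variables (x : nat -> F) (h : F).
Hypotheses (h0 : le 0 h) (hoc : order_continuous_elt le jn h)
  (x0 : forall n, le 0 (x n)) (xh : forall n, le (x n) h)
  (xd : forall n m, n <> m -> lm (x n) (x m) = 0).

Let s n := \sum_(k < n) x k.
Lemma sS n : s n.+1 = s n + x n. Proof. by rewrite /s big_ord_recr. Qed.
Lemma s0 : s 0 = 0. Proof. by rewrite /s big_ord0. Qed.
Lemma s_ge0 n : le 0 (s n).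
Proof.
elim: n => [|n IH]; first by rewrite s0; apply: lerefl.
by rewrite sS; have := leDD IH (x0 n); rewrite addr0.
Qed.
Lemma s_disj n m : (n <= m)%N -> lm (s n) (x m) = 0.
Proof.
elim: n => [|n IH] hnm.
  rewrite s0; apply: leanti; first exact: lml.
  by apply: lm_ge0 => //; apply: lerefl.
rewrite sS; apply: lm_addl => //; first exact: s_ge0.
  by apply: IH; apply: ltnW.
by apply: xd => e; move: hnm; rewrite e ltnn.
Qed.
Lemma s_h n : le (s n) h.
Proof.
elim: n => [|n IH]; first by rewrite s0.
by rewrite sS jnlm s_disj // addr0; apply: jnlub.
Qed.
Lemma s_mono n m : (n <= m)%N -> le (s n) (s m).
Proof.
move/subnK => <-; elim: (m - n)%N => [|k IH]; first by rewrite add0n; apply: lerefl.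
rewrite addSn sS; apply: letr IH _.
by have := leDl (s (k + n)) (x0 (k + n)); rewrite addr0.
Qed.

Definition Jset := {p : F * nat | (forall m, le (s m) p.1) /\ le p.1 h}.
Definition leJ (p q : Jset) := le (sval q).1 (sval p).1 /\ ((sval p).2 <= (sval q).2)%N.
Definition uJ (p : Jset) := (sval p).1 - s (sval p).2.

Lemma disj_null : forall eps : R, 0 < eps -> exists N, forall n, (N <= n)%N -> `|x n| < eps.
Proof.
have hJ : directed leJ.
  split.
  - by constructor; exists (h, 0%N); split => /=; [apply: s_h|apply: lerefl].
  - by move=> i; split; [apply: lerefl|].
  - by move=> i j k [h1 h2] [h3 h4]; split; [apply: letr h3 h1|apply: leq_trans h4].
  - move=> [[y n] [yu yh]] [[y' n'] [yu' yh']].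
    have P : (forall m, le (s m) (lm y y')) /\ le (lm y y') h.
      by split; [move=> m; apply: lmglb|apply: letr (lml _ _) yh].
    exists (exist _ (lm y y', maxn n n') P); split; split => /=;
      by [apply: lml|apply: leq_maxl|apply: lmr|apply: leq_maxr].
have hb : forall i, le 0 (uJ i) /\ le (uJ i) (la h).
  move=> [[y n] [yu yh]]; rewrite /uJ /=; split; first exact: le_sub0.
  rewrite la_id //; apply: letr yh.
  by have := leDl y (leN (s_ge0 n)); rewrite oppr0 addr0.
have hd : forall i j, leJ i j -> le (uJ j) (uJ i).
  move=> [[y n] ?] [[y' n'] ?] [/= h1 h2]; rewrite /uJ /=.
  by apply: leDD => //; apply: leN; apply: s_mono.
have hi : forall z, (forall i, le z (uJ i)) -> le z 0.
  move=> z hz.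
  have key : forall k (i : Jset), le (z *+ k.+1) (uJ i).
    elim=> [|k IH]; first by move=> i; rewrite mulr1n.
    move=> [[y n] [yu yh]]; rewrite /uJ /=.
    have yz : forall m, le (s m) (y - z).
      move=> m; have := hz (exist _ (y, m) (conj yu yh)); rewrite /uJ /= => hm.
      have := leD (s m - z) hm.
      by rewrite addrCA subrr addr0 addrA subrK.
    have P : (forall m, le (s m) (lm (y - z) h)) /\ le (lm (y - z) h) h.
      by split; [move=> m; apply: lmglb; [apply: yz|apply: s_h]|apply: lmr].
    have := IH (exist _ (lm (y - z) h, n) P); rewrite /uJ /= => hk.
    have hk2 : le (z *+ k.+1) (y - z - s n) by apply: letr hk _; apply: leD; apply: lml.
    have := leDl z hk2; rewrite -mulrS.
    by rewrite addrA addrCA subrr addr0.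
  have zk : forall k, le (z *+ k.+1) h.
    move=> k; have := key k (exist _ (h, 0%N) (conj s_h (lerefl h))).
    by rewrite /uJ /= s0 subr0.
  have hz0 : jn z 0 = 0.
    have n0 : `|jn z 0| = 0.
      apply: (@real_small _ `|h|) => // k.
      have kp : 0 < (k.+1%:R : R)^-1 by rewrite invr_gt0 ltr0Sn.
      have : le (jn z 0) ((k.+1%:R : R)^-1 *: h).
        apply: jnlub; last exact: le0Z (ltW kp) h0.
        have := leZ (ltW kp) (zk k); rewrite -[z *+ _]scaler_nat scalerA mulVf ?scale1r //.
      move/(norm_mono (jnr _ _)); rewrite normrZ gtr0_norm // mulrC.
      by [].
    by apply/eqP; rewrite -normr_eq0 n0.
  by rewrite -hz0; apply: jnl.
have := hoc hJ hb hd hi => hnet.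
move=> eps e0.
have e2 : 0 < eps / 2 by rewrite divr_gt0.
have [[[y0 n0] [yu yh]] Hi0] := hnet _ e2.
exists n0 => n hn.
have hq : forall m, (n0 <= m)%N -> `|y0 - s m| < eps / 2.
  move=> m hm; have := Hi0 (exist _ (y0, m) (conj yu yh)).
  by rewrite /uJ /= normr_id; apply; split => //=; apply: lerefl.
have -> : x n = (y0 - s n) - (y0 - s n.+1) by rewrite sS opprB addrC addrA subrK [s n + _]addrC addrK.
apply: le_lt_trans (ler_normB _ _) _.
by rewrite (splitr eps) ltrD // hq // leqW.
Qed.
End DisjNull.

End Lat.

Lemma inv_small (R : realType) (eps : R) : 0 < eps -> exists m : nat, (m.+1%:R : R)^-1 < eps.
Proof.
move=> e0; have ie : 0 <= eps^-1 by rewrite invr_ge0 ltW.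
have := archi_boundP ie; set N := Num.Def.archi_bound _ => hN.
exists N; rewrite invf_plt ?posrE ?ltr0Sn //; apply: lt_le_trans hN _.
by rewrite ler_nat.
Qed.

Lemma inv_anti (R : realType) (m m' : nat) : (m <= m')%N -> (m'.+1%:R : R)^-1 <= (m.+1%:R)^-1.
Proof. by move=> h; rewrite lef_pV2 ?posrE ?ltr0Sn // ler_nat. Qed.

Section P2.
Variables (R : realType) (F : normedModType R) (le : F -> F -> Prop) (jn : F -> F -> F).
Hypothesis HF : is_normed_lattice le jn.
Variables (E : normedModType R) (T : F -> E).
Local Notation lm := (lmeet jn).
Local Notation la := (labs jn).

Lemma part2 : strongly_DNS le jn T -> strictly_DNS jn T.
Proof.
move=> hs; apply: contrapT => hns; apply: hs.
have hg : forall k : nat, exists f : nat -> F, [/\ (forall n, `|f n| = 1), disjoint_seq jn f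
    & (forall n, `|T (f n)| <= (k.+1%:R : R)^-1)].
  move=> k; apply: contrapT => nf; apply: hns; exists (k.+1%:R : R)^-1; split => //.
have [g hgP] := choice hg.
pose I := (nat * seq F * nat)%type.
pose leI (i j : I) := [/\ (i.1.1 <= j.1.1)%N, {subset i.1.2 <= j.1.2} & (i.2 <= j.2)%N].
have sel : forall i : I, exists n, forall h, h \in i.1.2 -> positive le h ->
    order_continuous_elt le jn h -> `|lm (la (g i.1.1 n)) h| < (i.2.+1%:R : R)^-1.
  move=> [[k H] m] /=.
  suff : exists N, forall n, (N <= n)%N -> forall h, h \in H -> positive le h ->
    order_continuous_elt le jn h -> `|lm (la (g k n)) h| < (m.+1%:R : R)^-1.
    by move=> [N hN]; exists N; apply: hN.
  have [g1 g2 g3] := hgP k.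
  elim: H => [|h H [N hN]]; first by exists 0%N.
  case: (pselect (positive le h /\ order_continuous_elt le jn h)) => [[hp hoc]|hno].
    have x0 : forall n, le 0 (lm (la (g k n)) h).
      by move=> n; apply: (lm_ge0 HF) => //; apply: (la_ge0 HF).
    have xh : forall n, le (lm (la (g k n)) h) h by move=> n; apply: (lmr HF).
    have xd : forall n n', n <> n' -> lm (lm (la (g k n)) h) (lm (la (g k n')) h) = 0.
      move=> n n' nn; apply: (leanti HF); last by apply: (lm_ge0 HF).
      rewrite -(g2 n n' nn); apply: (lm_mono HF); apply: (lml HF).
    have mpos : 0 < (m.+1%:R : R)^-1 by rewrite invr_gt0 ltr0Sn.
    have [N1 hN1] := disj_null HF hp hoc x0 xh xd mpos.
    exists (maxn N N1) => n hn h'; rewrite in_cons => /orP [/eqP -> _ _|].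
      by apply: hN1; apply: leq_trans hn; apply: leq_maxr.
    by apply: hN; apply: leq_trans hn; apply: leq_maxl.
  exists N => n hn h'; rewrite in_cons => /orP [/eqP -> hp hoc|]; last exact: hN.
  by exfalso; apply: hno.
have [nsel hsel] := choice sel.
pose f (i : I) := g i.1.1 (nsel i).
exists I, leI, f; split.
- split.
  + by constructor; exact: (0%N, [::], 0%N).
  + by move=> i; split.
  + move=> i j l [h1 h2 h3] [h4 h5 h6]; split.
    * exact: leq_trans h4.
    * by move=> x /h2 /h5.
    * exact: leq_trans h6.
  + move=> [[k H] m] [[k' H'] m']; exists (maxn k k', H ++ H', maxn m m').
    split; split => /=; rewrite ?leq_maxl ?leq_maxr //.
      by move=> x hx; rewrite mem_cat hx.
    by move=> x hx; rewrite mem_cat hx orbT.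
- by move=> i; have [g1 _ _] := hgP i.1.1; apply: g1.
- move=> h hp hoc eps e0.
  have [m0 hm0] := inv_small e0.
  exists (0%N, [:: h], m0) => -[[k H] m] [/= _ hH hm].
  rewrite normr_id; apply: lt_le_trans (hsel (k, H, m) h _ hp hoc) _.
    by apply: hH; rewrite mem_seq1.
  by apply: ltW; apply: le_lt_trans hm0; apply: inv_anti.
- move=> eps e0.
  have [k0 hk0] := inv_small e0.
  exists (k0, [::], 0%N) => -[[k H] m] [/= hk _ _].
  rewrite normr_id /f /=; have [_ _ g3] := hgP k.
  by apply: le_lt_trans (g3 _) _; apply: le_lt_trans hk0; apply: inv_anti.
Qed.
End P2.

Section Cone.
Variables (R : realType) (F : completeNormedModType R) (le : F -> F -> Prop) (jn : F -> F -> F).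
Hypothesis HF : is_normed_lattice le jn.
Local Notation lm := (lmeet jn).
Local Notation la := (labs jn).

Lemma cone_closed (x : nat -> F) l N : x @ \oo --> l ->
  (forall n, (N <= n)%N -> le 0 (x n)) -> le 0 l.
Proof.
move=> hx hN.
have hn : nn jn l = 0.
  apply/eqP; rewrite -normr_eq0; apply/negPn/negP => hne.
  have e0 : 0 < `|nn jn l| by rewrite lt0r hne normr_ge0.
  move: (hx) => /cvgrPdist_lt /(_ _ e0) [n0 _ hn0].
  set n := maxn n0 N.
  have h1 : `|l - x n| < `|nn jn l| by apply: (hn0 n); rewrite /= leq_maxl.
  have h2 : le (nn jn l) (la (x n - l)).
    apply: (letr HF) (pp_la HF _); apply: (jn_mono HF); last exact: (lerefl HF _).
    have := leDl HF (- l) (hN n (leq_maxr _ _)); rewrite addr0 addrC.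
    by [].
  have := norm_mono HF (nn_ge0 HF l) h2; rewrite (norm_la HF) distrC => h3.
  by move: h1; rewrite ltNge h3.
have : le (- l) (- 0) by rewrite oppr0 -hn; apply: (jnl HF).
exact: (leNK HF).
Qed.

Lemma series_bound (b : nat -> F) : (forall k, le 0 (b k)) -> (forall k, `|b k| = 1) ->
  exists u, forall k, le (((2%:R : R)^-1) ^+ k *: b k) u.
Proof.
move=> b0 b1; set a := fun k => ((2%:R : R)^-1) ^+ k *: b k.
have a0 : forall k, le 0 (a k) by move=> k; apply: (le0Z HF) => //; rewrite exprn_ge0 // invr_ge0.
have hc : cvgn [normed series a].
  rewrite /normed_series_of; have -> : (fun n => `|a n|) = geometric 1 ((2%:R : R)^-1).
    apply: funext => n; rewrite /a normrZ b1 mulr1 normrX /= mul1r.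
    by rewrite ger0_norm // invr_ge0.
  apply: is_cvg_geometric_series.
  by rewrite ger0_norm ?invr_ge0 // invf_lt1 // ltr1n.
have hu := normed_cvg hc.
set u := limn (series a) in hu.
have smono : forall n m, (n <= m)%N -> le (series a n) (series a m).
  move=> n m /subnK <-; elim: (m - n)%N => [|k IH]; first by rewrite add0n; apply: (lerefl HF).
  rewrite addSn seriesSr; apply: (letr HF) IH _.
  by have := leDl HF (series a (k + n)) (a0 (k + n)); rewrite addr0.
have s0 : forall n, le 0 (series a n).
  by move=> n; have := smono 0%N n (leq0n _); rewrite /series /= big_geq.
exists u => k.
have hx : (fun M => series a M - series a k.+1) @ \oo --> u - series a k.+1.
  by apply: cvgB => //; apply: cvg_cst.
have := cone_closed hx (fun M hM => le_sub0 HF (smono _ _ hM)) => /(le0_sub HF) h.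
apply: (letr HF) h; rewrite seriesSr.
by have := leD HF (a k) (s0 k); rewrite add0r.
Qed.
End Cone.

Section P1.
Variables (R : realType) (F : completeNormedModType R) (le : F -> F -> Prop) (jn : F -> F -> F).
Hypothesis HF : is_normed_lattice le jn.
Variables (E : normedModType R) (T : {linear F -> E}).
Variables (I : Type) (leI : I -> I -> Prop) (f : I -> F).
Hypotheses (hdir : directed leI) (hn1 : forall i, `|f i| = 1)
  (hun : un_null le jn leI f) (hT : net_to0 leI (fun i => `|T (f i)|)).
Local Notation lm := (lmeet jn).
Local Notation la := (labs jn).
Local Notation pp := (pp jn).
Local Notation nn := (nn jn).

Lemma swap4 (V : zmodType) (a b c e : V) : (a - b) - (c - e) = (a - c) - (b - e).
Proof. rewrite !opprB !addrA [a - b + e]addrAC [a - c + e]addrAC; exact: addrAC. Qed.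

Definition c4 (n : nat) : R := (4%:R : R) ^+ n.
Definition w2 (n : nat) : R := ((2%:R : R)^-1) ^+ n.
Definition SS (H : seq F) := \sum_(z <- H) la z.
Definition Pn (p : nat * seq F) (i : I) :=
  `|lm (la (f i)) (c4 p.1 *: SS p.2)| < (p.1.+1%:R : R)^-1 /\ `|T (f i)| < (p.1.+1%:R : R)^-1.

Lemma c4_ge0 n : 0 <= c4 n. Proof. by rewrite exprn_ge0. Qed.
Lemma w2_ge0 n : 0 <= w2 n. Proof. by rewrite exprn_ge0 // invr_ge0. Qed.

Lemma SS_ge0 H : le 0 (SS H).
Proof.
rewrite /SS; elim: H => [|z H IH]; first by rewrite big_nil; apply: (lerefl HF).
by rewrite big_cons; have := leDD HF (la_ge0 HF z) IH; rewrite addr0.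
Qed.

Lemma sel_ex p : exists i, Pn p i.
Proof.
have e0 : 0 < (p.1.+1%:R : R)^-1 by rewrite invr_gt0 ltr0Sn.
have hp : positive le (c4 p.1 *: SS p.2) by apply: (le0Z HF); [apply: c4_ge0|apply: SS_ge0].
have [i1 h1] := hun hp e0.
have [i2 h2] := hT e0.
case: hdir => _ _ _ hub.
have [i3 [h13 h23]] := hub i1 i2.
exists i3; split.
  by have := h1 _ h13; rewrite normr_id.
by have := h2 _ h23; rewrite normr_id.
Qed.

Definition nxt p := projT1 (choice sel_ex) p.
Lemma nxtP p : Pn p (nxt p). Proof. exact: (projT2 (choice sel_ex) p). Qed.

Fixpoint hist n : seq F :=
  if n is n'.+1 then rcons (hist n') (f (nxt (n', hist n'))) else [::].
Definition y n := f (nxt (n, hist n)).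
Definition S n := \sum_(k < n) la (y k).

Lemma hist_sum n : SS (hist n) = S n.
Proof.
elim: n => [|n IH]; first by rewrite /SS /S big_nil big_ord0.
by rewrite /SS /= big_rcons /= -/(SS _) IH /S big_ord_recr.
Qed.

Lemma y1 n : `|y n| = 1. Proof. exact: hn1. Qed.
Lemma yP1 n : `|lm (la (y n)) (c4 n *: S n)| < (n.+1%:R : R)^-1.
Proof. by have [h _] := nxtP (n, hist n); rewrite -hist_sum. Qed.
Lemma yP2 n : `|T (y n)| < (n.+1%:R : R)^-1.
Proof. by have [_ h] := nxtP (n, hist n). Qed.

Lemma S_ge0 n : le 0 (S n).
Proof. by rewrite -hist_sum; apply: SS_ge0. Qed.

Lemma S_term m n : (m < n)%N -> le (la (y m)) (S n).
Proof.
elim: n => [//|n IH]; rewrite ltnS leq_eqVlt => /orP [/eqP ->|hmn].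
  by rewrite /S big_ord_recr /= -/(S n); have := leD HF (la (y n)) (S_ge0 n); rewrite add0r.
rewrite /S big_ord_recr /= -/(S n); apply: (letr HF) (IH hmn) _.
by have := leDl HF (S n) (la_ge0 HF (y n)); rewrite addr0.
Qed.


Lemma u_ex : exists u, forall k, le (w2 k *: la (y k)) u.
Proof.
apply: (series_bound HF) => k; first exact: (la_ge0 HF).
by rewrite (norm_la HF) y1.
Qed.
Definition u := proj1_sig (cid u_ex).
Lemma uP k : le (w2 k *: la (y k)) u. Proof. exact: (proj2_sig (cid u_ex)). Qed.
Lemma u_ge0 : le 0 u.
Proof. apply: (letr HF) (uP 0); apply: (le0Z HF); [apply: w2_ge0|apply: (la_ge0 HF)]. Qed.

Definition v n := c4 n *: S n + w2 n *: u.
Definition dP n := pp (pp (y n) - v n).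
Definition dN n := pp (nn (y n) - v n).
Definition d n := dP n - dN n.

Lemma v_ge0 n : le 0 (v n).
Proof.
have := leDD HF (le0Z HF (c4_ge0 n) (S_ge0 n)) (le0Z HF (w2_ge0 n) u_ge0).
by rewrite addr0.
Qed.

Lemma zero_le x : le 0 x -> le x 0 -> x = 0.
Proof. by move=> h1 h2; apply: (leanti HF). Qed.

Lemma disj_core a b (lam mu : R) : le 0 a -> le 0 b -> 0 < lam -> 0 < mu -> 1 <= lam * mu ->
  lm (pp (a - lam *: b)) (pp (b - mu *: a)) = 0.
Proof.
move=> ha hb l0 m0 lm1.
have li : 0 < lam^-1 by rewrite invr_gt0.
have h1 : le (pp (b - mu *: a)) (lam^-1 *: nn (a - lam *: b)).
  rewrite /Aux.nn -[X in jn _ X](scaler0 _ lam^-1) -(jnZ HF) //.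
  apply: (jn_mono HF); last by rewrite !scaler0; apply: (lerefl HF).
  rewrite opprB scalerBr scalerA mulVf ?gt_eqF // scale1r.
  apply: (leDl HF); apply: (leN HF); apply: (le0_sub HF); rewrite -scalerBl.
  apply: (le0Z HF) => //; rewrite subr_ge0 -(@ler_pM2l _ lam) // mulfV ?gt_eqF //.
apply: zero_le; first by apply: (lm_ge0 HF); apply: (pp_ge0 HF).
apply: (letr HF) (lm_mono HF (lerefl HF _) h1) _.
rewrite -[X in lm X _](scale1r).
rewrite (lmZZ HF) //; first exact: (lerefl HF).
- exact: (pp_ge0 HF).
- exact: (nn_ge0 HF).
- exact: (lm_pp_nn HF).
Qed.


Lemma le_addr x z : le 0 z -> le x (x + z).
Proof. by move=> h; have := leDl HF x h; rewrite addr0. Qed.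
Lemma le_addl x z : le 0 z -> le x (z + x).
Proof. by move=> h; rewrite addrC; apply: le_addr. Qed.

Lemma v_big m n : (m < n)%N -> le (c4 n *: la (y m)) (v n).
Proof.
move=> hmn; apply: (letr HF) (le_addr _ (le0Z HF (w2_ge0 n) u_ge0)).
by apply: (leZ HF); [apply: c4_ge0|apply: S_term].
Qed.

Lemma v_small m n : le ((w2 m * w2 n) *: la (y n)) (v m).
Proof.
apply: (letr HF) (le_addl _ (le0Z HF (c4_ge0 m) (S_ge0 m))).
by rewrite -scalerA; apply: (leZ HF); [apply: w2_ge0|apply: uP].
Qed.

Lemma dsig_big m n z : (m < n)%N -> le z (la (y n)) ->
  le (pp (z - v n)) (pp (la (y n) - c4 n *: la (y m))).
Proof.
move=> hmn hz; apply: (jn_mono HF); last exact: (lerefl HF).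
by apply: (leDD HF) hz _; apply: (leN HF); apply: v_big.
Qed.

Lemma dsig_small m n z : le z (la (y m)) ->
  le (pp (z - v m)) (pp (la (y m) - (w2 m * w2 n) *: la (y n))).
Proof.
move=> hz; apply: (jn_mono HF); last exact: (lerefl HF).
by apply: (leDD HF) hz _; apply: (leN HF); apply: v_small.
Qed.

Lemma lam_mu m n : (m <= n)%N -> 1 <= c4 n * (w2 m * w2 n).
Proof.
move=> hmn.
have e : c4 n * (w2 n * w2 n) = 1.
  rewrite /c4 /w2 -!exprMn.
  have -> : (4%:R : R) * ((2%:R)^-1 * (2%:R)^-1) = 1.
    by rewrite -invfM -natrM divff // pnatr_eq0.
  by rewrite expr1n.
rewrite -e; apply: ler_wpM2l; first exact: c4_ge0.
apply: ler_wpM2r; first exact: w2_ge0.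
rewrite /w2; apply: ler_wiXn2l => //.
by rewrite invf_le1 // ler1n.
Qed.

Lemma dd_disj m n z z' : (m < n)%N -> le z (la (y n)) -> le z' (la (y m)) ->
  lm (pp (z - v n)) (pp (z' - v m)) = 0.
Proof.
move=> hmn hz hz'; apply: zero_le; first by apply: (lm_ge0 HF); apply: (pp_ge0 HF).
apply: (letr HF) (lm_mono HF (dsig_big hmn hz) (dsig_small n hz')) _.
rewrite disj_core; first exact: (lerefl HF).
- exact: (la_ge0 HF).
- exact: (la_ge0 HF).
- by rewrite exprn_gt0.
- by rewrite mulr_gt0 // exprn_gt0 // invr_gt0.
- by apply: lam_mu; apply: ltnW.
Qed.

Definition P n := dP n + dN n.
Lemma P_ge0 n : le 0 (P n).
Proof. by have := leDD HF (pp_ge0 HF (pp (y n) - v n)) (pp_ge0 HF (nn (y n) - v n)); rewrite addr0. Qed.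

Lemma P_disj m n : (m < n)%N -> lm (P n) (P m) = 0.
Proof.
move=> hmn; rewrite /P /dP /dN.
have G := pp_ge0 HF.
have D : forall z, le z (la (y n)) -> lm (pp (z - v n)) (pp (pp (y m) - v m) + pp (nn (y m) - v m)) = 0.
  move=> z hz.
  apply: (lm_addr HF); rewrite ?G //.
    exact: (dd_disj hmn hz (pp_la HF _)).
  exact: (dd_disj hmn hz (nn_la HF _)).
apply: (lm_addl HF); rewrite ?G //.
- exact: (P_ge0 m).
- exact: (D _ (pp_la HF _)).
- exact: (D _ (nn_la HF _)).
Qed.

Lemma la_sub_le a b : le 0 a -> le 0 b -> le (la (a - b)) (a + b).
Proof.
move=> ha hb; apply: (jnlub HF).
  apply: (leDl HF); have := leN HF hb; rewrite oppr0 => h; exact: (letr HF h hb).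
rewrite opprB addrC; apply: (leD HF).
have := leN HF ha; rewrite oppr0 => h; exact: (letr HF h ha).
Qed.

Lemma d_disj : disjoint_seq jn d.
Proof.
move=> n m nm; rewrite /disjoint.
have hle : forall k, le (la (d k)) (P k) by move=> k; apply: la_sub_le; apply: (pp_ge0 HF).
apply: zero_le; first by apply: (lm_ge0 HF); apply: (la_ge0 HF).
apply: (letr HF) (lm_mono HF (hle n) (hle m)) _.
case: (ltngtP m n) => [hmn|hnm|e]; last by move: nm; rewrite e.
  by rewrite P_disj //; apply: (lerefl HF).
by rewrite (lmC HF) P_disj //; apply: (lerefl HF).
Qed.



Lemma w2_le n : w2 n <= (n.+1%:R : R)^-1.
Proof.
rewrite /w2 exprVn -natrX lef_pV2 ?posrE ?ltr0Sn ?ltr0n ?expn_gt0 // ler_nat.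
exact: ltn_expl.
Qed.

Lemma approx n : `|y n - d n| <= 2 * (1 + `|u|) * (n.+1%:R : R)^-1.
Proof.
have e : y n - d n = lm (pp (y n)) (v n) - lm (nn (y n)) (v n).
  rewrite -!(cut_id HF).
  have yq : y n = pp (y n) - nn (y n) by rewrite (pp_nn HF) addrK.
  rewrite {1}yq /d /dP /dN /Aux.pp.
  exact: swap4.
have hb : forall z, le 0 z -> le z (la (y n)) -> `|lm z (v n)| <= `|lm (la (y n)) (c4 n *: S n)| + w2 n * `|u|.
  move=> z z0 hz.
  have h1 : le (lm z (v n)) (lm (la (y n)) (c4 n *: S n) + w2 n *: u).
    apply: (letr HF) (lm_addD HF _ _ (le0Z HF (w2_ge0 n) u_ge0)).
    by apply: (lm_mono HF) hz (lerefl HF _).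
  apply: le_trans (norm_mono HF (lm_ge0 HF z0 (v_ge0 n)) h1) _.
  by apply: le_trans (ler_normD _ _) _; rewrite normrZ ger0_norm ?w2_ge0.
have hb2 : `|lm (la (y n)) (c4 n *: S n)| + w2 n * `|u| <= (1 + `|u|) * (n.+1%:R : R)^-1.
  rewrite mulrDl mul1r; apply: lerD; first exact: ltW (yP1 n).
  by rewrite mulrC; apply: ler_wpM2l => //; apply: w2_le.
rewrite e; apply: le_trans (ler_normB _ _) _.
have h1 := hb _ (pp_ge0 HF _) (pp_la HF _).
have h2 := hb _ (nn_ge0 HF _) (nn_la HF _).
rewrite -mulrA mulr_natl mulr2n.
by apply: lerD; apply: le_trans hb2.
Qed.


Lemma part1_seq : continuous T -> exists g : nat -> F, [/\ (forall n, `|g n| = 1),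
  disjoint_seq jn g & (fun n => `|T (g n)|) @ \oo --> (0 : R)].
Proof.
move=> HT.
have [M [M0 hM]] : exists M : R, 0 <= M /\ forall x, `|T x| <= M * `|x|.
  have := (linear_boundedP T).1 ((linear_bounded_continuous T).2 HT).
  case=> M [Mr hM]; exists (`|M| + 1); split; first by rewrite addr_ge0.
  apply: hM; rewrite (le_lt_trans (ler_norm M)) //.
  by rewrite ltrDl ltr01.
set K := 2 * (1 + `|u|).
have K0 : 0 < K by rewrite mulr_gt0 // ltr_pwDl.
have hK : forall n, `|y n - d n| <= K * (n.+1%:R : R)^-1 by move=> n; apply: approx.
have hKp : 0 < (2 * K)^-1 by rewrite invr_gt0 mulr_gt0.
have [N0 hN0] := inv_small hKp.
have small : forall n, (N0 <= n)%N -> K * (n.+1%:R : R)^-1 <= 2^-1.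
  move=> n hn; apply: le_trans (_ : K * (N0.+1%:R : R)^-1 <= _).
    by apply: ler_wpM2l; [apply: ltW|apply: inv_anti].
  have := ltW hN0; rewrite invfM => h.
  have := ler_wpM2l (ltW K0) h; rewrite mulrCA mulfV ?gt_eqF // mulr1.
  by [].
have dlarge : forall n, (N0 <= n)%N -> 2^-1 <= `|d n|.
  move=> n hn; have := ler_normD (y n - d n) (d n); rewrite subrK y1 => h1.
  have h2 := le_trans (hK n) (small n hn).
  have h3 : (2^-1 : R) = 1 - 2^-1 by field.
  by rewrite h3; lra.
have Td : forall n, `|T (d n)| <= (1 + M * K) * (n.+1%:R : R)^-1.
  move=> n; have -> : d n = y n - (y n - d n) by rewrite opprB addrC subrK.
  rewrite linearB; apply: le_trans (ler_normB _ _) _.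
  rewrite mulrDl mul1r; apply: lerD; first exact: ltW (yP2 n).
  apply: le_trans (hM _) _; rewrite -mulrA; apply: ler_wpM2l => //.
set g := fun j => (`|d (j + N0)|)^-1 *: d (j + N0).
have dpos : forall j, 0 < `|d (j + N0)|.
  by move=> j; apply: lt_le_trans (dlarge _ (leq_addl _ _)); rewrite invr_gt0.
exists g; split.
- move=> j; rewrite /g normrZ normfV normr_id mulVf //; apply: lt0r_neq0; exact: dpos.
- move=> n m nm; rewrite /Defs.disjoint /g !(laZ HF) ?invr_gt0 //.
  apply: (lmZZ HF); rewrite ?invr_gt0 //; try exact: (la_ge0 HF).
  by apply: d_disj => /addIn.
- set C := 2 * (1 + M * K).
  have C0 : 0 < C by rewrite mulr_gt0 // ltr_pwDl // mulr_ge0 // ltW.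
  have Tg : forall j, `|T (g j)| <= C * (j.+1%:R : R)^-1.
    move=> j; rewrite /g linearZ normrZ normfV normr_id.
    have hd := dlarge _ (leq_addl j N0).
    have hv : `|d (j + N0)|^-1 <= 2.
      by rewrite -[2 : R]invrK lef_pV2 ?posrE ?dpos // invr_gt0.
    apply: (le_trans (y := 2 * ((1 + M * K) * ((j + N0).+1%:R : R)^-1))).
      by apply: ler_pM => //.
    rewrite /C -mulrA; apply: ler_wpM2l => //; apply: ler_wpM2l.
      by rewrite addr_ge0 // mulr_ge0 // ltW.
    by apply: inv_anti; rewrite leq_addr.
  apply/cvgrPdist_lt => eps e0.
  have eC : 0 < eps / C by rewrite divr_gt0.
  have [m0 hm0] := inv_small eC.
  exists m0 => // j /= hj.
  rewrite sub0r normrN normr_id; apply: le_lt_trans (Tg j) _.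
  rewrite mulrC -ltr_pdivlMr //; apply: le_lt_trans hm0.
  exact: inv_anti.
Qed.

End P1.

End Aux.
Import Aux.

Theorem proposition5p6 (R : realType) (F : completeNormedModType R)
  (le : F -> F -> Prop) (jn : F -> F -> F)
  (HF : is_normed_lattice le jn)
  (E : completeNormedModType R) (T : {linear F -> E}) (HT : continuous T) :
  (DNS jn T -> weakly_DNS le jn T) /\
  (strongly_DNS le jn T -> strictly_DNS jn T).
Proof.
split.
- move=> hd [I [leI [f [hdir hn hun hT]]]]; apply: hd.
  exact: (part1_seq HF hdir hn hun hT HT).
- exact: (part2 HF).
Qed.
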